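(* Let $\{X_k\}_{k=0}^{N-1}$ be square random matrices and $\{y_k\}_{k=0}^{N-1}$ random vectors of compatible dimension, both with bounded second moments, and let $\{F_k\}_{k=0}^{N-1}$ be deterministic matrices of compatible dimensions. Suppose that $\mathbb E[X_k]=0$ for all $k$, that $X_k$ and $X_l$ are independent for $k\neq l$, and that $X_k$ and $y_l$ are independent whenever $k\ge l$. Then $$\mathbb E\Big[\Big\|\sum_{k=0}^{N-1}F_kX_ky_k\Big\|^2\Big]\le\sum_{k=0}^{N-1}\|F_k\|^2\,\mathbb E[\|X_k\|^2]\,\mathbb E[\|y_k\|^2].$$
   Context: $\|\cdot\|$ denotes the Euclidean norm for vectors and the spectral norm for matrices. *)

(* Defs.v *)
From HB Require Import structures.
From mathcomp Require Import all_boot all_order all_algebra.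
From mathcomp Require Import all_classical all_reals all_analysis.
Set Implicit Arguments. Unset Strict Implicit. Unset Printing Implicit Defensive.
Import Order.TTheory GRing.Theory Num.Theory.
Import numFieldNormedType.Exports.
Local Open Scope classical_set_scope.
Local Open Scope ring_scope.

Definition vnorm (R : realType) (n : nat) (v : 'cV[R]_n) : R :=
  Num.sqrt (\sum_(i < n) v i 0 ^+ 2).

Definition mnorm (R : realType) (m n : nat) (A : 'M[R]_(m, n)) : R :=
  sup [set vnorm (A *m v) | v in [set v : 'cV[R]_n | vnorm v <= 1]].

Definition preimg_sets (T : Type) (R : realType) (f : T -> R) : set (set T) :=
  [set f @^-1` B | B in [set B : set R | measurable B]].

Definition indep_gen d (T : measurableType d) (R : realType)
  (P : probability T R) (G1 G2 : set (set T)) : Prop :=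
  forall A B, <<s G1 >> A -> <<s G2 >> B ->
    P (A `&` B) = (P A * P B)%E.

(* Main.v *)
Require Import Defs.
From HB Require Import structures.
From mathcomp Require Import all_boot all_order all_algebra.
From mathcomp Require Import all_classical all_reals all_analysis.
From mathcomp Require Import ring lra.
Import Order.TTheory GRing.Theory Num.Theory.
Import numFieldNormedType.Exports.
Local Open Scope classical_set_scope.
Local Open Scope ring_scope.


Section ExAPI.
Set Implicit Arguments.
Unset Strict Implicit.
Context d (T : measurableType d) (R : realType) (P : probability T R).

Definition Int (f : T -> R) := P.-integrable setT (EFin \o f).
Definition Ex (f : T -> R) := fine (\int[P]_t (f t)%:E)%E.

Lemma ExE f : Int f -> (\int[P]_t (f t)%:E = (Ex f)%:E)%E.
Proof. by move=> If; rewrite /Ex fineK//; exact: integrable_fin_num. Qed.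

Lemma Int_meas f : Int f -> measurable_fun setT f.
Proof. by move=> /integrableP[/measurable_realfun.measurable_EFinP]. Qed.

Lemma Int_add f g : Int f -> Int g -> Int (fun t => f t + g t).
Proof. by move=> If Ig; exact: (integrableD measurableT If Ig). Qed.

Lemma Ex_add f g : Int f -> Int g -> Ex (fun t => f t + g t) = Ex f + Ex g.
Proof.
move=> If Ig; rewrite /Ex.
under eq_integral do rewrite EFinD.
rewrite (integralD_EFin measurableT If Ig) fineD//; exact: integrable_fin_num.
Qed.

Lemma Int_scale c f : Int f -> Int (fun t => c * f t).
Proof.
move=> If; have := integrableZl measurableT c If.
by apply: eq_integrable => // t _ /=; rewrite EFinM.
Qed.

Lemma Ex_scale c f : Int f -> Ex (fun t => c * f t) = c * Ex f.
Proof.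
move=> If; rewrite /Ex.
rewrite (_ : (fun t => _) = (fun t => c%:E * (EFin \o f) t)%E); last first.
  by apply/funext => t; rewrite EFinM.
by rewrite (integralZl measurableT If) fineM//; exact: integrable_fin_num.
Qed.

Lemma Int_le (f g : T -> R) : measurable_fun setT f -> Int g -> (forall t, `|f t| <= g t) -> Int f.
Proof.
move=> mf Ig fg; apply: (le_integrable measurableT _ _ Ig).
  exact/measurable_realfun.measurable_EFinP.
move=> t _ /=; have h : `|f t| <= `|g t| by rewrite (le_trans (fg t))//; exact: ler_norm.
move: h; rewrite -lee_fin; exact. 
Qed.

Lemma Int_ge0 (f : T -> R) : measurable_fun setT f -> (forall t, 0 <= f t) ->
  (\int[P]_t (f t)%:E < +oo)%E -> Int f.
Proof.
move=> mf f0 fi; apply/integrableP; split; first exact/measurable_realfun.measurable_EFinP.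
under eq_integral do rewrite /= ger0_norm//.
exact: fi.
Qed.

Lemma Ex_cst c : Ex (fun _ => c) = c.
Proof.
rewrite /Ex integral_cst//.
transitivity (fine (c%:E * 1%E)); first by congr (fine (_ * _)); exact: probability_setT.
by rewrite mule1.
Qed.

Lemma Int_cst c : Int (fun _ => c).
Proof.
apply: (@Int_le (fun _ => c) (fun _ => `|c|)) => //.
apply: Int_ge0 => //.
rewrite integral_cst//.
have -> : (`|c|%:E * P [set: T] = `|c|%:E * 1)%E.
  by congr (_ * _)%E; exact: probability_setT.
by rewrite mule1 ltry.
Qed.

Lemma Int_sum (I : Type) (s : seq I) (f : I -> T -> R) :
  (forall i, Int (f i)) -> Int (fun t => \sum_(i <- s) f i t).
Proof.
move=> If; elim: s => [|i s IH].
  under eq_fun do rewrite big_nil.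
  exact: Int_cst.
under eq_fun do rewrite big_cons.
exact: Int_add.
Qed.

Lemma Ex_sum (I : Type) (s : seq I) (f : I -> T -> R) :
  (forall i, Int (f i)) -> Ex (fun t => \sum_(i <- s) f i t) = \sum_(i <- s) Ex (f i).
Proof.
move=> If; elim: s => [|i s IH].
  under eq_fun do rewrite big_nil.
  by rewrite big_nil /Ex integral0.
under eq_fun do rewrite big_cons.
by rewrite Ex_add ?big_cons ?IH //; exact: Int_sum.
Qed.

Lemma Ex_le f g : Int f -> Int g -> (forall t, f t <= g t) -> Ex f <= Ex g.
Proof.
move=> If Ig fg; rewrite -lee_fin -!ExE//.
by apply: (le_integral measurableT If Ig) => t _; rewrite lee_fin.
Qed.

Lemma le_integral_nm (f g : T -> \bar R) : (forall t, 0 <= f t)%E ->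
  (forall t, f t <= g t)%E -> (\int[P]_t f t <= \int[P]_t g t)%E.
Proof.
move=> f0 fg.
have g0 t : (0 <= g t)%E by exact: le_trans (f0 t) (fg t).
rewrite (ge0_integralTE _ f0) (ge0_integralTE _ g0) /=.
apply: ereal_sup_le => _ [h hf <-]; exists h => //= x.
exact: le_trans (hf x) (fg x).
Qed.

End ExAPI.


Section Indep.
Set Implicit Arguments.
Unset Strict Implicit.
Context d (T : measurableType d) (R : realType) (P : probability T R).

Definition smeas (G : set (set T)) (f : T -> R) :=
  measurable_fun (setT : set (g_sigma_algebraType G)) f.

Lemma smeas_pre G f B : smeas G f -> measurable B -> <<s G >> (f @^-1` B).
Proof. by move=> mf mB; have := mf measurableT B mB; rewrite setTI. Qed.

Lemma sig_sub G : G `<=` measurable -> <<s G >> `<=` (measurable : set (set T)).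
Proof. by move=> GT; apply: smallest_sub => //; exact: sigma_algebra_measurable. Qed.

Lemma smeas_meas G f : G `<=` measurable -> smeas G f -> measurable_fun setT f.
Proof. move=> GT mf _ B mB; rewrite setTI; apply: (sig_sub GT); exact: smeas_pre mf mB. Qed.

Lemma smeas_gen G f : (forall B, measurable B -> G (f @^-1` B)) -> smeas G f.
Proof. by move=> h _ B mB; rewrite setTI; exact: sub_sigma_algebra (h B mB). Qed.

Lemma smeasM G f g : smeas G f -> smeas G g -> smeas G (fun t => f t * g t).
Proof. by move=> mf mg; exact: measurable_realfun.measurable_funM. Qed.

Lemma smeas_pos G f : smeas G f -> smeas G f^\+.
Proof. by move=> mf; exact: measurable_realfun.measurable_funrpos. Qed.

Lemma smeas_neg G f : smeas G f -> smeas G f^\-.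
Proof. by move=> mf; exact: measurable_realfun.measurable_funrneg. Qed.

Lemma indic_ge0' (A : set T) t : 0 <= \1_A t :> R.
Proof. by rewrite indicE. Qed.

Lemma int_simple (I : finType) (a : I -> R) (A : I -> set T) :
  (forall i, 0 <= a i) -> (forall i, measurable (A i)) ->
  (\int[P]_t (\sum_(i : I) a i * \1_(A i) t)%:E = \sum_(i : I) (a i)%:E * P (A i))%E.
Proof.
move=> a0 mA.
under eq_integral do rewrite -sumEFin.
rewrite ge0_integral_sum//; last 2 first.
- by move=> i; apply/measurable_realfun.measurable_EFinP; apply: measurable_realfun.measurable_funM.
- by move=> i t _; rewrite lee_fin mulr_ge0// indic_ge0'.
apply: eq_bigr => i _.
under eq_integral do rewrite EFinM.
rewrite ge0_integralZl_EFin//.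
- by rewrite integral_indic// setIT.
- by apply/measurable_realfun.measurable_EFinP; exact: measurable_realfun.measurable_indic.
Qed.

Lemma simple_prod G1 G2 : G1 `<=` measurable -> G2 `<=` measurable ->
  indep_gen P G1 G2 ->
  forall (I J : finType) (a : I -> R) (A : I -> set T) (b : J -> R) (B : J -> set T),
  (forall i, 0 <= a i) -> (forall j, 0 <= b j) ->
  (forall i, <<s G1 >> (A i)) -> (forall j, <<s G2 >> (B j)) ->
  (\int[P]_t ((\sum_i a i * \1_(A i) t) * (\sum_j b j * \1_(B j) t))%:E =
   \int[P]_t (\sum_i a i * \1_(A i) t)%:E * \int[P]_t (\sum_j b j * \1_(B j) t)%:E)%E.
Proof.
move=> G1m G2m ind I J a A b B a0 b0 sA sB.
have mA i := sig_sub G1m (sA i).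
have mB j := sig_sub G2m (sB j).
rewrite !int_simple//.
transitivity (\int[P]_t (\sum_(ij : I * J) (a ij.1 * b ij.2) *
   \1_(A ij.1 `&` B ij.2) t)%:E)%E.
  congr (integral _ _ _); apply/funext => t; congr EFin.
  rewrite big_distrlr /= pair_big /=; apply: eq_bigr => -[i j] _ /=.
  by rewrite indicI /= mulrACA.
rewrite int_simple//; last 2 first.
- by move=> ij; rewrite mulr_ge0.
- by move=> ij; apply: measurableI.
pose p X := fine (P X).
have PA X : measurable X -> P X = (p X)%:E.
  by move=> mX; rewrite /p fineK//; exact: fin_num_measure.
rewrite (eq_bigr (fun ij : I * J => ((a ij.1 * b ij.2) * (p (A ij.1) * p (B ij.2)))%:E)); last first.
  by move=> ij _; rewrite ind// (PA _ (mA _)) (PA _ (mB _)).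
rewrite (eq_bigr (fun i => (a i * p (A i))%:E)); last by move=> i _; rewrite (PA _ (mA _)).
rewrite (eq_bigr (fun j => (b j * p (B j))%:E)); last by move=> j _; rewrite (PA _ (mB _)).
rewrite !sumEFin -EFinM; congr EFin.
rewrite big_distrlr /= pair_big /=; apply: eq_bigr => -[i j] _ /=.
by rewrite mulrACA.
Qed.

End Indep.


Section Indep2.
Set Implicit Arguments.
Unset Strict Implicit.
Context d (T : measurableType d) (R : realType) (P : probability T R).

Definition aco (n i : nat) : R := if (i < n * 2 ^ n)%N then i%:R * 2 ^- n else n%:R.
Definition ase (f : T -> R) (n i : nat) : set T :=
  if (i < n * 2 ^ n)%N then dyadic_approx setT (EFin \o f) n i
  else integer_approx setT (EFin \o f) n.

Lemma approx_repr (f : T -> R) n t :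
  approx setT (EFin \o f) n t =
  \sum_(i < (n * 2 ^ n).+1) aco n i * \1_(ase f n i) t.
Proof.
rewrite /approx big_ord_recr /= /aco /ase ltnn; congr (_ + _).
by apply: eq_bigr => i _; rewrite /= ltn_ord.
Qed.

Lemma aco_ge0 n i : 0 <= aco n i.
Proof. by rewrite /aco; case: ifP => _ //; rewrite mulr_ge0. Qed.

Lemma ase_sig G (f : T -> R) n i : smeas G f -> <<s G >> (ase f n i).
Proof.
move=> mf; rewrite /ase; case: ifPn => _.
  rewrite /dyadic_approx; case: ifPn => _; last exact: sigma_algebra0.
  have -> : [set: T] `&` [set x | (EFin \o f) x \in EFin @` [set` dyadic_itv R n i]] =
     f @^-1` [set` dyadic_itv R n i].
    apply/seteqP; split => x /=.
      by move=> [_ /set_mem [r ri [<-]]].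
    by move=> fx; split => //; apply/mem_set; exists (f x).
  exact: smeas_pre mf (measurable_itv _).
rewrite /integer_approx.
have -> : [set: T] `&` [set x | (n%:R%:E <= (EFin \o f) x)%E] =
   f @^-1` `[n%:R, +oo[.
  apply/seteqP; split => x /=.
    by move=> [_]; rewrite lee_fin in_itv /= andbT.
  by rewrite in_itv /= andbT lee_fin.
exact: smeas_pre mf (measurable_itv _).
Qed.

End Indep2.
Arguments aco {R}.
Arguments aco_ge0 {R}.


Section Indep3.
Set Implicit Arguments.
Unset Strict Implicit.
Context d (T : measurableType d) (R : realType) (P : probability T R).

Lemma EFin_cvg (u : nat -> R) (l : R) : u n @[n --> \oo] --> l ->
  ((u n)%:E @[n --> \oo] --> l%:E)%E.
Proof. by move=> cu; apply: cvg_EFin => //; exact: nearW. Qed.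

Lemma mono_cvg (h : nat -> T -> R) (l : T -> R) :
  (forall n, measurable_fun setT (h n)) -> (forall n t, 0 <= h n t) ->
  (forall t, {homo h^~ t : n m / (n <= m)%N >-> n <= m}) ->
  (forall t, h n t @[n --> \oo] --> l t) ->
  (\int[P]_t (h n t)%:E @[n --> \oo] --> \int[P]_t (l t)%:E)%E.
Proof.
move=> mh h0 nd cv.
have := @cvg_monotone_convergence _ _ _ P setT measurableT (fun n t => (h n t)%:E).
have -> : (fun x => limn (fun n => (h n x)%:E)) = (fun t => (l t)%:E).
  by apply/funext => t; apply: cvg_lim => //; exact: EFin_cvg.
apply.
- by move=> n; exact/measurable_realfun.measurable_EFinP.
- by move=> n t _; rewrite lee_fin.
- by move=> t _ n m nm; rewrite lee_fin nd.
Qed.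


Lemma approx_ge0 (f : T -> R) n t : 0 <= approx setT (EFin \o f) n t.
Proof.
rewrite approx_repr; apply: sumr_ge0 => i _; apply: mulr_ge0; first exact: aco_ge0.
exact: indic_ge0'.
Qed.

Lemma approx_meas G (f : T -> R) n : G `<=` measurable -> smeas G f ->
  measurable_fun setT (approx setT (EFin \o f) n).
Proof.
move=> Gm mf.
rewrite (_ : approx _ _ n = fun t => \sum_(i < (n * 2 ^ n).+1) aco n i * \1_(ase f n i) t).
  apply: measurable_sum => i; apply: measurable_realfun.measurable_funM => //.
  apply: measurable_realfun.measurable_indic; exact: (sig_sub Gm (ase_sig n i mf)).
by apply/funext => t; rewrite approx_repr.
Qed.

Lemma approx_nd (f : T -> R) t : {homo (approx setT (EFin \o f))^~ t : n m / (n <= m)%N >-> n <= m}.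
Proof.
by move=> n m nm; have /lefP := nd_approx setT (EFin \o f) nm; apply.
Qed.

Lemma approx_cvg (f : T -> R) t : (forall t, 0 <= f t) ->
  approx setT (EFin \o f) n t @[n --> \oo] --> f t.
Proof.
move=> f0.
exact: (@cvg_approx _ _ _ setT (EFin \o f) t (fun x _ => f0 x) I (ltry _)).
Qed.

Lemma indep_ge0 G1 G2 : G1 `<=` measurable -> G2 `<=` measurable ->
  indep_gen P G1 G2 -> forall f g, smeas G1 f -> smeas G2 g ->
  (forall t, 0 <= f t) -> (forall t, 0 <= g t) ->
  (\int[P]_t (f t)%:E < +oo)%E -> (\int[P]_t (g t)%:E < +oo)%E ->
  (\int[P]_t (f t * g t)%:E = \int[P]_t (f t)%:E * \int[P]_t (g t)%:E)%E.
Proof.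
move=> G1m G2m ind f g sf sg f0 g0 fi gi.
pose fa := approx setT (EFin \o f); pose ga := approx setT (EFin \o g).
have H1 : (\int[P]_t (fa n t * ga n t)%:E @[n --> \oo] --> \int[P]_t (f t * g t)%:E)%E.
  apply: mono_cvg.
  - by move=> n; apply: measurable_realfun.measurable_funM; [exact: (approx_meas _ G1m sf)|exact: (approx_meas _ G2m sg)].
  - by move=> n t; apply: mulr_ge0; exact: approx_ge0.
  - move=> t n m nm; apply: ler_pM; try exact: approx_ge0; exact: approx_nd.
  - by move=> t; apply: cvgM; exact: approx_cvg.
have H2 : (\int[P]_t (fa n t)%:E @[n --> \oo] --> \int[P]_t (f t)%:E)%E.
  apply: mono_cvg => //.
  - by move=> n; exact: (approx_meas _ G1m sf).
  - by move=> n t; exact: approx_ge0.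
  - by move=> t; exact: approx_nd.
  - by move=> t; exact: approx_cvg.
have H3 : (\int[P]_t (ga n t)%:E @[n --> \oo] --> \int[P]_t (g t)%:E)%E.
  apply: mono_cvg => //.
  - by move=> n; exact: (approx_meas _ G2m sg).
  - by move=> n t; exact: approx_ge0.
  - by move=> t; exact: approx_nd.
  - by move=> t; exact: approx_cvg.
have fin0 : (\int[P]_t (f t)%:E)%E \is a fin_num.
  by rewrite ge0_fin_numE// integral_ge0// => t _; rewrite lee_fin.
have gin0 : (\int[P]_t (g t)%:E)%E \is a fin_num.
  by rewrite ge0_fin_numE// integral_ge0// => t _; rewrite lee_fin.
have H4 := @cvgeM _ _ (eventually_filter) _ _ _ _ _ (mule_def_fin fin0 gin0) H2 H3.
have E n : (\int[P]_t (fa n t * ga n t)%:E = \int[P]_t (fa n t)%:E * \int[P]_t (ga n t)%:E)%E.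
  have := @simple_prod _ _ _ P _ _ G1m G2m ind _ _ (fun i : 'I_(n * 2 ^ n).+1 => aco n i) (fun i : 'I_(n * 2 ^ n).+1 => ase f n i)
    (fun i : 'I_(n * 2 ^ n).+1 => aco n i) (fun i : 'I_(n * 2 ^ n).+1 => ase g n i)
    (fun i => aco_ge0 n i) (fun i => aco_ge0 n i) (fun i => ase_sig n i sf) (fun i => ase_sig n i sg).
  have Ef : fa n = (fun t => \sum_(i < (n * 2 ^ n).+1) aco n i * \1_(ase f n i) t).
    by apply/funext => t; exact: approx_repr.
  have Eg : ga n = (fun t => \sum_(i < (n * 2 ^ n).+1) aco n i * \1_(ase g n i) t).
    by apply/funext => t; exact: approx_repr.
  by rewrite Ef Eg.
have EE : (fun n => \int[P]_t (fa n t * ga n t)%:E)%E =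
          (fun n => \int[P]_t (fa n t)%:E * \int[P]_t (ga n t)%:E)%E.
  by apply/funext => n; exact: E.
rewrite EE in H1.
exact: (cvg_unique _ H1 H4).
Qed.

End Indep3.


Section Indep4.
Set Implicit Arguments.
Unset Strict Implicit.
Context d (T : measurableType d) (R : realType) (P : probability T R).

Lemma Int_le2 (f g : T -> R) : measurable_fun setT f -> Int P g ->
  (forall t, `|f t| <= `|g t|) -> Int P f.
Proof.
move=> mf Ig fg; apply: (le_integrable measurableT _ _ Ig).
  exact/measurable_realfun.measurable_EFinP.
by move=> t _ /=; have h := fg t; move: h; rewrite -lee_fin; exact.
Qed.

Lemma Int_sub f g : Int P f -> Int P g -> Int P (fun t => f t - g t).
Proof.
move=> If Ig; have := Int_add If (Int_scale (-1) Ig).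
by congr (Int P _); apply/funext => t; rewrite mulN1r.
Qed.

Lemma Ex_sub f g : Int P f -> Int P g -> Ex P (fun t => f t - g t) = Ex P f - Ex P g.
Proof.
move=> If Ig; have := Ex_add If (Int_scale (-1) Ig).
rewrite Ex_scale// mulN1r => <-.
by congr (Ex P _); apply/funext => t; rewrite mulN1r.
Qed.

Lemma fposneg (f : T -> R) t : f t = f^\+ t - f^\- t.
Proof.
rewrite /funrpos /funrneg /=; have [h|h] := leP 0 (f t).
  have h2 : - f t <= 0 by rewrite oppr_le0.
  by rewrite (max_r h2) subr0.
have h2 : 0 <= - f t by rewrite oppr_ge0 ltW.
by rewrite (max_l h2) opprK add0r.
Qed.

Lemma fpos_le (f : T -> R) t : `|f^\+ t| <= `|f t|.
Proof.
rewrite /funrpos /=; have [h|h] := leP 0 (f t).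
  by [].
by rewrite normr0.
Qed.

Lemma fneg_le (f : T -> R) t : `|f^\- t| <= `|f t|.
Proof.
rewrite /funrneg /=; have [h|h] := leP 0 (f t).
  have h2 : - f t <= 0 by rewrite oppr_le0.
  by rewrite (max_r h2) normr0.
have h2 : 0 <= - f t by rewrite oppr_ge0 ltW.
by rewrite (max_l h2) normrN.
Qed.

Section WithG.
Variables (G1 G2 : set (set T)).
Hypotheses (G1m : G1 `<=` measurable) (G2m : G2 `<=` measurable)
  (ind : indep_gen P G1 G2).

Lemma indep_ge0_Ex f g : smeas G1 f -> smeas G2 g ->
  (forall t, 0 <= f t) -> (forall t, 0 <= g t) -> Int P f -> Int P g ->
  Int P (fun t => f t * g t) /\ Ex P (fun t => f t * g t) = Ex P f * Ex P g.
Proof.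
move=> sf sg f0 g0 If Ig.
have H := indep_ge0 G1m G2m ind sf sg f0 g0 (integrable_lty measurableT If)
  (integrable_lty measurableT Ig).
rewrite (ExE If) (ExE Ig) -EFinM in H.
split.
  apply: Int_ge0.
  - apply: measurable_realfun.measurable_funM; [exact: smeas_meas G1m sf|exact: smeas_meas G2m sg].
  - by move=> t; rewrite mulr_ge0.
  - by rewrite H ltry.
by rewrite /Ex H.
Qed.

Lemma indep_Ex f g : smeas G1 f -> smeas G2 g -> Int P f -> Int P g ->
  Int P (fun t => f t * g t) /\ Ex P (fun t => f t * g t) = Ex P f * Ex P g.
Proof.
move=> sf sg If Ig.
have mf := smeas_meas G1m sf; have mg := smeas_meas G2m sg.
have Ifp : Int P f^\+.
  by apply: Int_le2 If (fpos_le f); exact: measurable_realfun.measurable_funrpos.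
have Ifn : Int P f^\-.
  by apply: Int_le2 If (fneg_le f); exact: measurable_realfun.measurable_funrneg.
have Igp : Int P g^\+.
  by apply: Int_le2 Ig (fpos_le g); exact: measurable_realfun.measurable_funrpos.
have Ign : Int P g^\-.
  by apply: Int_le2 Ig (fneg_le g); exact: measurable_realfun.measurable_funrneg.
have [I1 E1] := indep_ge0_Ex (smeas_pos sf) (smeas_pos sg) (@funrpos_ge0 _ _ _) (@funrpos_ge0 _ _ _) Ifp Igp.
have [I2 E2] := indep_ge0_Ex (smeas_pos sf) (smeas_neg sg) (@funrpos_ge0 _ _ _) (@funrneg_ge0 _ _ _) Ifp Ign.
have [I3 E3] := indep_ge0_Ex (smeas_neg sf) (smeas_pos sg) (@funrneg_ge0 _ _ _) (@funrpos_ge0 _ _ _) Ifn Igp.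
have [I4 E4] := indep_ge0_Ex (smeas_neg sf) (smeas_neg sg) (@funrneg_ge0 _ _ _) (@funrneg_ge0 _ _ _) Ifn Ign.
have e : (fun t => f t * g t) = (fun t => (fun t => f^\+ t * g^\+ t - f^\+ t * g^\- t) t
   - (fun t => f^\- t * g^\+ t - f^\- t * g^\- t) t).
  by apply/funext => t /=; rewrite (fposneg f t) (fposneg g t); ring.
have Ef : Ex P f = Ex P f^\+ - Ex P f^\-.
  rewrite -Ex_sub//; congr (Ex P _); apply/funext => t; exact: fposneg.
have Eg : Ex P g = Ex P g^\+ - Ex P g^\-.
  rewrite -Ex_sub//; congr (Ex P _); apply/funext => t; exact: fposneg.
rewrite e; split.
  by apply: Int_sub; apply: Int_sub.
rewrite Ex_sub; [|by apply: Int_sub..].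
rewrite !Ex_sub// E1 E2 E3 E4 Ef Eg; ring.
Qed.

End WithG.
End Indep4.


Section Norms.
Set Implicit Arguments.
Unset Strict Implicit.
Variable R : realType.

Lemma sq_le (x y : R) : `|x| <= y -> x ^+ 2 <= y ^+ 2.
Proof.
move=> h; rewrite -real_normK ?num_real// !expr2.
by apply: ler_pM => //; exact: normr_ge0.
Qed.

Lemma sumsq_ge0 n (v : 'cV[R]_n) : 0 <= \sum_i v i 0 ^+ 2.
Proof. by apply: sumr_ge0 => i _; exact: sqr_ge0. Qed.

Lemma vnorm_ge0 n (v : 'cV[R]_n) : 0 <= vnorm v.
Proof. exact: sqrtr_ge0. Qed.

Lemma vnorm_sq n (v : 'cV[R]_n) : vnorm v ^+ 2 = \sum_i v i 0 ^+ 2.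
Proof. by rewrite sqr_sqrtr// sumsq_ge0. Qed.

Lemma coord_le n (v : 'cV[R]_n) i : `|v i 0| <= vnorm v.
Proof.
rewrite -sqrtr_sqr /vnorm ler_sqrt ?sumsq_ge0//.
rewrite (bigD1 i)//= lerDl; apply: sumr_ge0 => j _; exact: sqr_ge0.
Qed.

Lemma vnormZ n (c : R) (v : 'cV[R]_n) : vnorm (c *: v) = `|c| * vnorm v.
Proof.
rewrite /vnorm (eq_bigr (fun i => c ^+ 2 * v i 0 ^+ 2)); last first.
  by move=> i _; rewrite mxE exprMn.
by rewrite -mulr_sumr sqrtrM ?sqr_ge0// sqrtr_sqr.
Qed.

Lemma vnorm0 n (v : 'cV[R]_n) : vnorm v = 0 -> v = 0.
Proof.
move=> h; apply/matrixP => i j; rewrite ord1 mxE.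
by apply/eqP; rewrite -normr_eq0 eq_le normr_ge0 andbT -h coord_le.
Qed.

Lemma vnorm_zero n : vnorm (0 : 'cV[R]_n) = 0.
Proof. by rewrite /vnorm big1 ?sqrtr0// => i _; rewrite mxE expr0n. Qed.

Lemma mnorm_hasub m n (A : 'M[R]_(m, n)) :
  has_ubound [set vnorm (A *m v) | v in [set v : 'cV[R]_n | vnorm v <= 1]].
Proof.
exists (Num.sqrt (\sum_(i < m) (\sum_(j < n) `|A i j|) ^+ 2)).
move=> _ [v /= v1 <-]; rewrite /vnorm ler_sqrt; last first.
  by apply: sumr_ge0 => i _; exact: sqr_ge0.
apply: ler_sum => i _; apply: sq_le; rewrite mxE.
apply: (le_trans (ler_norm_sum _ _ _)); apply: ler_sum => j _.
rewrite normrM -[leRHS]mulr1; apply: ler_wpM2l => //.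
exact: le_trans (coord_le v j) v1.
Qed.

Lemma mnorm_ub m n (A : 'M[R]_(m, n)) v : vnorm v <= 1 -> vnorm (A *m v) <= mnorm A.
Proof. by move=> v1; apply: ub_le_sup (mnorm_hasub A) _ _; exists v. Qed.

Lemma mnorm_ge0 m n (A : 'M[R]_(m, n)) : 0 <= mnorm A.
Proof.
apply: le_trans (vnorm_ge0 (A *m 0)) (mnorm_ub A _).
by rewrite /vnorm big1 ?sqrtr0// => i _; rewrite mxE expr0n.
Qed.

Lemma mnorm_bound m n (A : 'M[R]_(m, n)) v : vnorm (A *m v) <= mnorm A * vnorm v.
Proof.
have [v0|vpos] := eqVneq (vnorm v) 0.
  by rewrite (vnorm0 v0) mulmx0 !vnorm_zero mulr0.
have cpos : 0 < vnorm v by rewrite lt_neqAle eq_sym vpos vnorm_ge0.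
have := mnorm_ub A (v := (vnorm v)^-1 *: v).
rewrite vnormZ -scalemxAr vnormZ ger0_norm ?invr_ge0 ?vnorm_ge0// mulVf// lexx.
by move=> /(_ isT); rewrite mulrC ler_pdivrMr.
Qed.

Lemma entry_le m n (A : 'M[R]_(m, n)) i j : `|A i j| <= mnorm A.
Proof.
have e1 : vnorm (delta_mx j 0 : 'cV[R]_n) = 1.
  rewrite /vnorm (bigD1 j)//= big1 ?addr0 ?mxE ?eqxx ?expr1n ?sqrtr1//.
  by move=> k kj; rewrite mxE (negbTE kj) expr0n.
have := mnorm_ub A (v := delta_mx j 0); rewrite e1 lexx => /(_ isT) h.
apply: le_trans h; apply: le_trans (coord_le _ i).
rewrite mxE (bigD1 j)//= big1 ?addr0.
  by rewrite mxE !eqxx mulr1.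
by move=> k kj; rewrite mxE (negbTE kj) mulr0.
Qed.

End Norms.


Unset Implicit Arguments.
Set Strict Implicit.
Section Main.
Variables (d : measure_display) (T : measurableType d) (R : realType)
  (P : probability T R) (N m n : nat)
  (X : 'I_N -> T -> 'M[R]_n) (y : 'I_N -> T -> 'cV[R]_n)
  (F : 'I_N -> 'M[R]_(m, n)).

Definition G1 (k : 'I_N) : set (set T) :=
  [set A | exists i j, preimg_sets (fun t => X k t i j) A].
Definition G2 (k : 'I_N) : set (set T) :=
  [set A | exists (l : 'I_N) i j, l != k /\ preimg_sets (fun t => X l t i j) A]
  `|` [set A | exists (l : 'I_N) i, (l <= k)%N /\ preimg_sets (fun t => y l t i 0) A].

Hypotheses (mX : forall k i j, measurable_fun setT (fun t => X k t i j))
  (my : forall k i, measurable_fun setT (fun t => y k t i 0))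
  (iX : forall k, (\int[P]_t ((mnorm (X k t)) ^+ 2)%:E < +oo)%E)
  (iy : forall k, (\int[P]_t ((vnorm (y k t)) ^+ 2)%:E < +oo)%E)
  (zX : forall k i j, (\int[P]_t (X k t i j)%:E = 0)%E)
  (ind : forall k, indep_gen P (G1 k) (G2 k)).

Lemma G1m k : G1 k `<=` measurable.
Proof.
move=> A [i [j [B mB <-]]].
by have := mX k i j measurableT _ mB; rewrite setTI.
Qed.

Lemma G2m k : G2 k `<=` measurable.
Proof.
move=> A [[l [i [j [_ [B mB <-]]]]]|[l [i [_ [B mB <-]]]]].
  by have := mX l i j measurableT _ mB; rewrite setTI.
by have := my l i measurableT _ mB; rewrite setTI.
Qed.

Lemma sX1 (k : 'I_N) (a b : 'I_n) : smeas (G1 k) (fun t => X k t a b).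
Proof. by apply: smeas_gen => B mB; exists a, b; exists B. Qed.

Lemma sX2 (l k : 'I_N) (a b : 'I_n) : k != l -> smeas (G2 l) (fun t => X k t a b).
Proof. by move=> kl; apply: smeas_gen => B mB; left; exists k, a, b; split => //; exists B. Qed.

Lemma sy2 (l k : 'I_N) (b : 'I_n) : (k <= l)%N -> smeas (G2 l) (fun t => y k t b 0).
Proof. by move=> kl; apply: smeas_gen => B mB; right; exists k, b; split => //; exists B. Qed.

Lemma abs_le_sq1 (x : R) : `|x| <= 1 + x ^+ 2.
Proof.
rewrite -real_normK ?num_real//; have := normr_ge0 x; set u := `|x|; nra.
Qed.

Lemma abs_mul_le (u v : R) : `|u * v| <= u ^+ 2 + v ^+ 2.
Proof.
rewrite normrM -(real_normK (num_real u)) -(real_normK (num_real v)).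
have := normr_ge0 u; have := normr_ge0 v; set a := `|u|; set b := `|v|; nra.
Qed.

Lemma M1 k a b : Int P (fun t => X k t a b ^+ 2).
Proof.
apply: Int_ge0; first exact: measurable_realfun.measurable_funX.
  by move=> t; exact: sqr_ge0.
apply: le_lt_trans (iX k); apply: le_integral_nm => t; rewrite lee_fin ?sqr_ge0//.
by apply: sq_le; exact: entry_le.
Qed.

Lemma My k : Int P (fun t => vnorm (y k t) ^+ 2).
Proof.
apply: Int_ge0 (iy k); last by move=> t; exact: sqr_ge0.
rewrite (_ : (fun t => _) = (fun t => \sum_i y k t i 0 ^+ 2)).
  by apply: measurable_sum => i; exact: measurable_realfun.measurable_funX.
by apply/funext => t; rewrite vnorm_sq.
Qed.

Lemma M2 k b : Int P (fun t => y k t b 0 ^+ 2).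
Proof.
apply: Int_le (My k) _; first exact: measurable_realfun.measurable_funX.
move=> t; rewrite ger0_norm ?sqr_ge0//; apply: sq_le; exact: coord_le.
Qed.

Lemma M3 k a b : Int P (fun t => X k t a b).
Proof.
apply: (@Int_le _ _ _ P (fun t => X k t a b) (fun t => 1 + X k t a b ^+ 2)).
- exact: mX.
- exact: Int_add (Int_cst P 1) (M1 k a b).
- move=> t; exact: abs_le_sq1.
Qed.

Lemma P1 k a b c e : Int P (fun t => X k t a b * X k t c e).
Proof.
apply: (@Int_le _ _ _ P _ (fun t => X k t a b ^+ 2 + X k t c e ^+ 2)).
- exact: measurable_realfun.measurable_funM.
- exact: Int_add (M1 k a b) (M1 k c e).
- move=> t; exact: abs_mul_le.
Qed.

Lemma P2 k b e : Int P (fun t => y k t b 0 * y k t e 0).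
Proof.
apply: (@Int_le _ _ _ P _ (fun t => y k t b 0 ^+ 2 + y k t e 0 ^+ 2)).
- exact: measurable_realfun.measurable_funM.
- exact: Int_add (M2 k b) (M2 k e).
- move=> t; exact: abs_mul_le.
Qed.

Lemma Pxy k a b : Int P (fun t => X k t a b ^+ 2 * y k t b 0 ^+ 2).
Proof.
have := indep_Ex (G1m k) (G2m k) (ind k)
  (smeasM (sX1 k a b) (sX1 k a b)) (smeasM (sy2 k k b (leqnn k)) (sy2 k k b (leqnn k)))
  (M1 k a b) (M2 k b).
by move=> [+ _]; congr (Int P _); apply/funext => t; rewrite !expr2.
Qed.


Definition Q (k : 'I_N) (a b : 'I_n) (l : 'I_N) (c e : 'I_n) (t : T) : R :=
  X k t a b * y k t b 0 * (X l t c e * y l t e 0).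

Lemma EX0 k a b : Ex P (fun t => X k t a b) = 0.
Proof. by rewrite /Ex zX. Qed.

Lemma Q_cross (k l : 'I_N) a b c e : (k < l)%N ->
  Int P (Q k a b l c e) /\ Ex P (Q k a b l c e) = 0.
Proof.
move=> kl.
pose W t := X k t a b * y k t b 0 * y l t e 0.
have IW : Int P W.
  apply: (@Int_le _ _ _ P W (fun t => X k t a b ^+ 2 * y k t b 0 ^+ 2 + y l t e 0 ^+ 2)).
  - apply: measurable_realfun.measurable_funM; first apply: measurable_realfun.measurable_funM.
    + exact: mX.
    + exact: my.
    + exact: my.
  - exact: Int_add (Pxy k a b) (M2 l e).
  - by move=> t; rewrite /W -exprMn; exact: abs_mul_le.
have kl' : k != l by apply/eqP => h; rewrite h ltnn in kl.
have sW : smeas (G2 l) W :=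
  smeasM (smeasM (sX2 l k a b kl') (sy2 l k b (ltnW kl))) (sy2 l l e (leqnn l)).
have [I1 E1] := indep_Ex (G1m l) (G2m l) (ind l) (sX1 l c e) sW (M3 l c e) IW.
have eQ : Q k a b l c e = (fun t => X l t c e * W t).
  by apply/funext => t; rewrite /Q /W; ring.
by rewrite eQ; split => //; rewrite E1 EX0 mul0r.
Qed.

Lemma Q_sym k a b l c e : Q k a b l c e = Q l c e k a b.
Proof. by apply/funext => t; rewrite /Q mulrC. Qed.

Lemma Q_diag k a b c e : Int P (Q k a b k c e) /\
  Ex P (Q k a b k c e) =
    Ex P (fun t => X k t a b * X k t c e) * Ex P (fun t => y k t b 0 * y k t e 0).
Proof.
have [I1 E1] := indep_Ex (G1m k) (G2m k) (ind k) (smeasM (sX1 k a b) (sX1 k c e))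
  (smeasM (sy2 k k b (leqnn k)) (sy2 k k e (leqnn k))) (P1 k a b c e) (P2 k b e).
have eQ : Q k a b k c e = (fun t => (X k t a b * X k t c e) * (y k t b 0 * y k t e 0)).
  by apply/funext => t; rewrite /Q; ring.
by rewrite eQ.
Qed.

Lemma Q_int_ex k a b l c e : Int P (Q k a b l c e) /\
  (k != l -> Ex P (Q k a b l c e) = 0).
Proof.
have [kl|lk|kl] := ltngtP k l.
- by have [] := Q_cross k l a b c e kl; split.
- by rewrite Q_sym; have [] := Q_cross l k c e a b lk; split.
- have kl' : k = l := val_inj kl.
  subst l; split; last by rewrite eqxx.
  exact: (Q_diag k a b c e).1.
Qed.


Definition Z (k : 'I_N) (t : T) : 'cV[R]_m := F k *m X k t *m y k t.

Lemma Zc k t r : Z k t r 0 = \sum_a \sum_b F k r a * (X k t a b * y k t b 0).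
Proof.
rewrite /Z mxE.
under eq_bigr do rewrite mxE big_distrl.
rewrite exchange_big; apply: eq_bigr => a _; apply: eq_bigr => b _ /=.
by rewrite mulrA.
Qed.

Lemma ZZexp k l r t : Z k t r 0 * Z l t r 0 =
  \sum_a \sum_b \sum_c \sum_e (F k r a * F l r c) * Q k a b l c e t.
Proof.
rewrite !Zc big_distrl; apply: eq_bigr => a _ /=.
rewrite big_distrl; apply: eq_bigr => b _ /=.
rewrite big_distrr; apply: eq_bigr => c _ /=.
rewrite big_distrr; apply: eq_bigr => e _ /=.
by rewrite /Q; ring.
Qed.

Lemma ZZ k l r : Int P (fun t => Z k t r 0 * Z l t r 0) /\
  (k != l -> Ex P (fun t => Z k t r 0 * Z l t r 0) = 0).
Proof.
have E : (fun t => Z k t r 0 * Z l t r 0) = (fun t =>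
   \sum_a \sum_b \sum_c \sum_e (F k r a * F l r c) * Q k a b l c e t).
  by apply/funext => t; exact: ZZexp.
have IQ a b c e : Int P (fun t => (F k r a * F l r c) * Q k a b l c e t).
  exact: Int_scale (Q_int_ex k a b l c e).1.
rewrite E; split.
  apply: Int_sum => a; apply: Int_sum => b; apply: Int_sum => c.
  by apply: Int_sum => e.
move=> kl.
rewrite Ex_sum; last first.
  move=> a; apply: Int_sum => b; apply: Int_sum => c; by apply: Int_sum => e.
apply: big1 => a _; rewrite Ex_sum; last first.
  move=> b; apply: Int_sum => c; by apply: Int_sum => e.
apply: big1 => b _; rewrite Ex_sum; last first.
  move=> c; by apply: Int_sum => e.
apply: big1 => c _; rewrite Ex_sum //.
apply: big1 => e _; rewrite Ex_scale; last exact: (Q_int_ex k a b l c e).1.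
by rewrite ((Q_int_ex k a b l c e).2 kl) mulr0.
Qed.


Lemma S2exp t : vnorm (\sum_(k < N) F k *m X k t *m y k t) ^+ 2 =
  \sum_r \sum_k \sum_l Z k t r 0 * Z l t r 0.
Proof.
rewrite vnorm_sq; apply: eq_bigr => r _.
rewrite summxE expr2 big_distrl; apply: eq_bigr => k _ /=.
by rewrite big_distrr.
Qed.

Lemma Zn2 k : (fun t => vnorm (Z k t) ^+ 2) = (fun t => \sum_r Z k t r 0 * Z k t r 0).
Proof. by apply/funext => t; rewrite vnorm_sq; apply: eq_bigr => r _; rewrite expr2. Qed.

Lemma IZn2 k : Int P (fun t => vnorm (Z k t) ^+ 2).
Proof. by rewrite Zn2; apply: Int_sum => r; exact: (ZZ k k r).1. Qed.

Lemma S2 : Int P (fun t => vnorm (\sum_(k < N) F k *m X k t *m y k t) ^+ 2) /\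
  Ex P (fun t => vnorm (\sum_(k < N) F k *m X k t *m y k t) ^+ 2) =
  \sum_k Ex P (fun t => vnorm (Z k t) ^+ 2).
Proof.
have E : (fun t => vnorm (\sum_(k < N) F k *m X k t *m y k t) ^+ 2) =
  (fun t => \sum_r \sum_k \sum_l Z k t r 0 * Z l t r 0).
  by apply/funext => t; exact: S2exp.
rewrite E; split.
  apply: Int_sum => r; apply: Int_sum => k; apply: Int_sum => l.
  exact: (ZZ k l r).1.
rewrite Ex_sum; last first.
  move=> r; apply: Int_sum => k; apply: Int_sum => l; exact: (ZZ k l r).1.
under eq_bigr => r _.
  rewrite Ex_sum; last first.
    move=> k; apply: Int_sum => l; exact: (ZZ k l r).1.
  under eq_bigr => k _.
    rewrite Ex_sum; last by move=> l; exact: (ZZ k l r).1.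
    rewrite (bigD1 k)//= big1 ?addr0; last first.
      by move=> l lk; apply: (ZZ k l r).2; rewrite eq_sym.
    over.
  over.
rewrite exchange_big; apply: eq_bigr => k _ /=.
rewrite Zn2 Ex_sum//; move=> r; exact: (ZZ k k r).1.
Qed.


Definition KX k := Ex P (fun t => mnorm (X k t) ^+ 2).
Definition KY k := Ex P (fun t => vnorm (y k t) ^+ 2).

Lemma eKX k : (\int[P]_t ((mnorm (X k t)) ^+ 2)%:E = (KX k)%:E)%E.
Proof.
rewrite /KX /Ex fineK// ge0_fin_numE ?iX//.
by apply: integral_ge0 => t _; rewrite lee_fin sqr_ge0.
Qed.

Lemma eKY k : (\int[P]_t ((vnorm (y k t)) ^+ 2)%:E = (KY k)%:E)%E.
Proof. exact: ExE (My k). Qed.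

Lemma Av2 (A : 'M[R]_n) (v : 'cV[R]_n) : vnorm (A *m v) ^+ 2 =
  \sum_i \sum_j \sum_l (A i j * A i l) * (v j 0 * v l 0).
Proof.
rewrite vnorm_sq; apply: eq_bigr => i _.
rewrite mxE expr2 big_distrl; apply: eq_bigr => j _ /=.
rewrite big_distrr; apply: eq_bigr => l _ /=; ring.
Qed.

Lemma reorder (f : 'I_n -> 'I_n -> 'I_n -> R) :
  \sum_i \sum_j \sum_l f i j l = \sum_j \sum_l \sum_i f i j l.
Proof. by rewrite exchange_big; apply: eq_bigr => j _; exact: exchange_big. Qed.

Definition Mm k j l := \sum_i Ex P (fun t => X k t i j * X k t i l).
Definition Qf k (v : 'cV[R]_n) := \sum_j \sum_l Mm k j l * (v j 0 * v l 0).

Lemma IXv k v : Int P (fun t => vnorm (X k t *m v) ^+ 2).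
Proof.
rewrite (_ : (fun t => _) = (fun t => \sum_i \sum_j \sum_l (v j 0 * v l 0) * (X k t i j * X k t i l))).
  apply: Int_sum => i; apply: Int_sum => j; apply: Int_sum => l.
  exact: Int_scale (P1 k i j i l).
apply/funext => t; rewrite Av2; apply: eq_bigr => i _; apply: eq_bigr => j _.
by apply: eq_bigr => l _; rewrite mulrC.
Qed.

Lemma Qf_eq k v : Qf k v = Ex P (fun t => vnorm (X k t *m v) ^+ 2).
Proof.
rewrite (_ : (fun t => _) = (fun t => \sum_i \sum_j \sum_l (v j 0 * v l 0) * (X k t i j * X k t i l))); last first.
  apply/funext => t; rewrite Av2; apply: eq_bigr => i _; apply: eq_bigr => j _.
  by apply: eq_bigr => l _; rewrite mulrC.
rewrite Ex_sum; last first.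
  move=> i; apply: Int_sum => j; apply: Int_sum => l; exact: Int_scale (P1 k i j i l).
under eq_bigr => i _.
  rewrite Ex_sum; last first.
    move=> j; apply: Int_sum => l; exact: Int_scale (P1 k i j i l).
  under eq_bigr => j _.
    rewrite Ex_sum; last by move=> l; exact: Int_scale (P1 k i j i l).
    under eq_bigr => l _ do rewrite (Ex_scale (v j 0 * v l 0) (P1 k i j i l)).
    over.
  over.
rewrite reorder /Qf /Mm; apply: eq_bigr => j _; apply: eq_bigr => l _.
by rewrite big_distrl; apply: eq_bigr => i _ /=; rewrite mulrC.
Qed.


Lemma Qf_scale k c v : Qf k (c *: v) = c ^+ 2 * Qf k v.
Proof.
rewrite /Qf mulr_sumr; apply: eq_bigr => j _; rewrite mulr_sumr.
by apply: eq_bigr => l _; rewrite !mxE; ring.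
Qed.

Lemma Qf_w k w : vnorm w <= 1 -> Qf k w <= KX k.
Proof.
move=> w1; rewrite Qf_eq -lee_fin -(ExE (IXv k w)) -eKX.
apply: le_integral_nm => t; rewrite lee_fin ?sqr_ge0//.
by apply: sq_le; rewrite ger0_norm ?vnorm_ge0//; exact: mnorm_ub.
Qed.

Lemma Qf_le k v : Qf k v <= KX k * vnorm v ^+ 2.
Proof.
have [v0|vpos] := eqVneq (vnorm v) 0.
  rewrite v0 expr0n mulr0 (vnorm0 v0) /Qf big1// => j _; rewrite big1// => l _.
  by rewrite !mxE mul0r mulr0.
have cpos : 0 < vnorm v by rewrite lt_neqAle eq_sym vpos vnorm_ge0.
have ev : v = vnorm v *: ((vnorm v)^-1 *: v) by rewrite scalerA mulfV// scale1r.
rewrite ev Qf_scale -ev mulrC; apply: ler_wpM2r; first exact: sqr_ge0.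
apply: Qf_w; rewrite vnormZ ger0_norm ?invr_ge0 ?vnorm_ge0// mulVf//.
Qed.

Lemma IW2 k : Int P (fun t => vnorm (X k t *m y k t) ^+ 2).
Proof.
rewrite (_ : (fun t => _) = (fun t => \sum_i \sum_j \sum_l Q k i j k i l t)).
  apply: Int_sum => i; apply: Int_sum => j; apply: Int_sum => l.
  exact: (Q_diag k i j i l).1.
apply/funext => t; rewrite Av2; apply: eq_bigr => i _; apply: eq_bigr => j _.
by apply: eq_bigr => l _; rewrite /Q; ring.
Qed.

Lemma IQy k : Int P (fun t => Qf k (y k t)).
Proof.
by apply: Int_sum => j; apply: Int_sum => l; exact: Int_scale (P2 k j l).
Qed.

Lemma EW2 k : Ex P (fun t => vnorm (X k t *m y k t) ^+ 2) = Ex P (fun t => Qf k (y k t)).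
Proof.
rewrite (_ : (fun t => _) = (fun t => \sum_i \sum_j \sum_l Q k i j k i l t)); last first.
  apply/funext => t; rewrite Av2; apply: eq_bigr => i _; apply: eq_bigr => j _.
  by apply: eq_bigr => l _; rewrite /Q; ring.
rewrite Ex_sum; last first.
  move=> i; apply: Int_sum => j; apply: Int_sum => l; exact: (Q_diag k i j i l).1.
under eq_bigr => i _.
  rewrite Ex_sum; last first.
    move=> j; apply: Int_sum => l; exact: (Q_diag k i j i l).1.
  under eq_bigr => j _.
    rewrite Ex_sum; last by move=> l; exact: (Q_diag k i j i l).1.
    under eq_bigr => l _ do rewrite (Q_diag k i j i l).2.
    over.
  over.
rewrite /Qf Ex_sum; last first.
  by move=> j; apply: Int_sum => l; exact: Int_scale (P2 k j l).
rewrite reorder; apply: eq_bigr => j _.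
rewrite Ex_sum; last by move=> l; exact: Int_scale (P2 k j l).
apply: eq_bigr => l _.
rewrite (Ex_scale (Mm k j l) (P2 k j l)) /Mm big_distrl.
by apply: eq_bigr.
Qed.

Lemma diag_bound k : Ex P (fun t => vnorm (Z k t) ^+ 2) <=
  mnorm (F k) ^+ 2 * (KX k * KY k).
Proof.
apply: le_trans (_ : _ <= Ex P (fun t => mnorm (F k) ^+ 2 * vnorm (X k t *m y k t) ^+ 2)) _.
  apply: Ex_le; [exact: IZn2|exact: Int_scale (IW2 k)|] => t.
  rewrite /Z -mulmxA -exprMn; apply: sq_le.
  by rewrite ger0_norm ?vnorm_ge0//; exact: mnorm_bound.
rewrite (Ex_scale _ (IW2 k)); apply: ler_wpM2l; first exact: sqr_ge0.
rewrite EW2 /KY -(Ex_scale _ (My k)).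
apply: Ex_le; [exact: IQy|exact: Int_scale (My k)|] => t.
exact: Qf_le.
Qed.


Lemma main_ineq :
  (\int[P]_t ((vnorm (\sum_(k < N) F k *m X k t *m y k t)) ^+ 2)%:E
   <= \sum_(k < N) (((mnorm (F k)) ^+ 2)%:E
                    * (\int[P]_t ((mnorm (X k t)) ^+ 2)%:E)
                    * (\int[P]_t ((vnorm (y k t)) ^+ 2)%:E)))%E.
Proof.
have [IS ES] := S2.
rewrite (ExE IS) ES.
have E : (\sum_(k < N) (((mnorm (F k)) ^+ 2)%:E
                    * (\int[P]_t ((mnorm (X k t)) ^+ 2)%:E)
                    * (\int[P]_t ((vnorm (y k t)) ^+ 2)%:E)) =
   (\sum_(k < N) mnorm (F k) ^+ 2 * KX k * KY k)%:E)%E.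
  rewrite -sumEFin; apply: eq_bigr => k _; rewrite eKX eKY -!EFinM.
  done.
rewrite E lee_fin; apply: ler_sum => k _.
by rewrite -mulrA; exact: diag_bound.
Qed.

End Main.

Unset Implicit Arguments.

Theorem lemma6 (d : measure_display) (T : measurableType d) (R : realType)
  (P : probability T R) (N m n : nat)
  (X : 'I_N -> T -> 'M[R]_n) (y : 'I_N -> T -> 'cV[R]_n)
  (F : 'I_N -> 'M[R]_(m, n)) :
  (* measurability (random matrices / vectors) *)
  (forall k i j, measurable_fun setT (fun t => X k t i j)) ->
  (forall k i, measurable_fun setT (fun t => y k t i 0)) ->
  (* bounded second moments *)
  (forall k, (\int[P]_t ((mnorm (X k t)) ^+ 2)%:E < +oo)%E) ->
  (forall k, (\int[P]_t ((vnorm (y k t)) ^+ 2)%:E < +oo)%E) ->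
  (* zero mean *)
  (forall k i j, (\int[P]_t (X k t i j)%:E = 0)%E) ->
  (* X_k is independent of {X_l}_{l <> k} together with {y_l}_{l <= k} *)
  (forall k : 'I_N,
     indep_gen P
       [set A | exists i j, preimg_sets (fun t => X k t i j) A]
       ([set A | exists (l : 'I_N) i j, l != k /\ preimg_sets (fun t => X l t i j) A]
        `|` [set A | exists (l : 'I_N) i, (l <= k)%N /\ preimg_sets (fun t => y l t i 0) A])) ->
  (\int[P]_t ((vnorm (\sum_(k < N) F k *m X k t *m y k t)) ^+ 2)%:E
   <= \sum_(k < N) (((mnorm (F k)) ^+ 2)%:E
                    * (\int[P]_t ((mnorm (X k t)) ^+ 2)%:E)
                    * (\int[P]_t ((vnorm (y k t)) ^+ 2)%:E)))%E.
Proof.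
move=> mX my iX iy zX ind.
exact: (@main_ineq d T R P N m n X y F mX my iX iy zX ind).
Qed.
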